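(* For every $n\ge2$ and every generalised snake configuration $\bar\rho\in\mathcal{GS}_n$, $$\operatorname{sgn}(\bar\rho)(-1)^{S(\bar\rho)}=\sum_{\theta\in\{0,1\}^2}C_\theta\exp\Big(\frac{\pi i\theta_1}{n}\big(A(\bar\rho)+\tfrac12C(\bar\rho)\big)+\frac{\pi i\theta_2}{n}\big(B(\bar\rho)+\tfrac12C(\bar\rho)\big)\Big),$$ where $C_\theta=\tfrac12(-1)^{(\theta_1+n+1)(\theta_2+n+1)}$ and $\operatorname{sgn}(\bar\rho)$ is the sign of $\bar\rho$ as a permutation of $\mathbb{M}_n$.
   Context: $\mathbb{T}_n=(\mathbb{Z}/n\mathbb{Z})^2$, $e^1=(1,0)$, $e^2=(0,1)$, $e^3=\frac12(e^1+e^2)$; mid-edges $\mathbb{M}_n$ = black $\{v+\frac12e^1:v\in\mathbb{T}_n\}$ ⊔ white $\{v+\frac12e^2:v\in\mathbb{T}_n\}$, coordinates mod $n$. A generalised snake configuration is a permutation $\bar\rho$ of $\mathbb{M}_n$ with $\bar\rho(x)\in\{x,x+e^3,x+e^1\}$ ($x$ black), $\bar\rho(x)\in\{x,x+e^3,x+e^2\}$ ($x$ white); $\mathcal{GS}_n$ their set. $S(\bar\rho)$ = number of vertices $v$ with $\bar\rho(v-\frac12e^1)=v+\frac12e^1$ and $\bar\rho(v-\frac12e^2)=v+\frac12e^2$ (crossings); $A(\bar\rho),B(\bar\rho),C(\bar\rho)$ = numbers of $x\in\mathbb{M}_n$ with $\bar\rho(x)=x+e^1$, $x+e^2$, $x+e^3$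 respectively. *)

(* Defs.v *)
From HB Require Import structures.
From mathcomp Require Import all_boot all_order all_algebra all_fingroup.
From mathcomp Require Import reals trigo.
From mathcomp Require Import complex.
Set Implicit Arguments. Unset Strict Implicit. Unset Printing Implicit Defensive.
Import Order.TTheory GRing.Theory Num.Theory.
Local Open Scope ring_scope.

(* Torus vertices T_n = (Z/nZ)^2 (used only for n >= 2). *)
Definition vert (n : nat) : finType := ('Z_n * 'Z_n)%type.
Definition e1 {n : nat} : vert n := (1, 0).
Definition e2 {n : nat} : vert n := (0, 1).
Definition vadd {n : nat} (v w : vert n) : vert n := (v.1 + w.1, v.2 + w.2).
Definition vsub {n : nat} (v w : vert n) : vert n := (v.1 - w.1, v.2 - w.2).

(* Mid-edges M_n: (false, v) is the black mid-edge v + e^1/2,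
   (true, v) is the white mid-edge v + e^2/2. *)
Definition midedge (n : nat) : finType := (bool * vert n)%type.
Definition black {n : nat} (v : vert n) : midedge n := (false, v).
Definition white {n : nat} (v : vert n) : midedge n := (true, v).

(* x + e^1, x + e^2, x + e^3 for a mid-edge x (e^3 = (e^1+e^2)/2). *)
Definition plus1 {n : nat} (x : midedge n) : midedge n := (x.1, vadd x.2 e1).
Definition plus2 {n : nat} (x : midedge n) : midedge n := (x.1, vadd x.2 e2).
Definition plus3 {n : nat} (x : midedge n) : midedge n :=
  if x.1 then black (vadd x.2 e2)   (* v + e2/2 + e3 = (v+e2) + e1/2 *)
  else white (vadd x.2 e1).         (* v + e1/2 + e3 = (v+e1) + e2/2 *)

Definition is_gsnake {n : nat} (rho : {perm midedge n}) : Prop :=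
  forall x : midedge n,
    if x.1 == false
    then rho x = x \/ rho x = plus3 x \/ rho x = plus1 x
    else rho x = x \/ rho x = plus3 x \/ rho x = plus2 x.

(* S: crossings at v : rho(v - e1/2) = v + e1/2 and rho(v - e2/2) = v + e2/2. *)
Definition Scount {n : nat} (rho : {perm midedge n}) : nat :=
  #|[set v : vert n | (rho (black (vsub v e1)) == black v)
                     && (rho (white (vsub v e2)) == white v)]|.
Definition Acount {n : nat} (rho : {perm midedge n}) : nat :=
  #|[set x : midedge n | rho x == plus1 x]|.
Definition Bcount {n : nat} (rho : {perm midedge n}) : nat :=
  #|[set x : midedge n | rho x == plus2 x]|.
Definition Ccount {n : nat} (rho : {perm midedge n}) : nat :=
  #|[set x : midedge n | rho x == plus3 x]|.

Definition expi {R : realType} (t : R) : R[i] := Complex (cos t) (sin t).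

Definition lhs {R : realType} {n : nat} (rho : {perm midedge n}) : R[i] :=
  ((-1) ^+ odd_perm rho * (-1) ^+ Scount rho : R)%:C%C.

Definition Ctheta {R : realType} (n : nat) (t1 t2 : nat) : R :=
  2^-1 * (-1) ^+ ((t1 + n + 1) * (t2 + n + 1))%N.

Definition rhs {R : realType} {n : nat} (rho : {perm midedge n}) : R[i] :=
  \sum_(th : bool * bool)
    (Ctheta n th.1 th.2)%:C%C *
    expi (pi * (th.1 : nat)%:R / n%:R * ((Acount rho)%:R + 2^-1 * (Ccount rho)%:R)
        + pi * (th.2 : nat)%:R / n%:R * ((Bcount rho)%:R + 2^-1 * (Ccount rho)%:R)).

(* Main.v *)
Require Import Defs.
From HB Require Import structures.
From mathcomp Require Import all_boot all_order all_algebra all_fingroup.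
From mathcomp Require Import reals trigo.
From mathcomp Require Import complex.
From mathcomp Require Import zify ring lra.
Module M1.
Set Implicit Arguments. Unset Strict Implicit. Unset Printing Implicit Defensive.

Section Z.
Variables (n : nat) (hn : 1 < n).

Lemma zlt (z : 'Z_n) : (z : nat) < n.
Proof. by case: z => m /=; rewrite Zp_cast. Qed.

Lemma modsmall a : a < 2 * n -> a %% n = if a < n then a else a - n.
Proof.
move=> h; case: ifP => h2; first by rewrite modn_small.
have -> : a = (a - n) + n by lia.
by rewrite modnDr modn_small //; lia.
Qed.

Lemma zaddE (y z : 'Z_n) : ((y + z)%R : nat) = if y + z < n then y + z else y + z - n.
Proof.
rewrite -modsmall; last by have := zlt y; have := zlt z; lia.
by rewrite /=; congr (_ %% _); apply: Zp_cast.
Qed.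

Lemma z1E : ((1%R : 'Z_n) : nat) = 1.
Proof. by rewrite /= (Zp_cast hn) modn_small. Qed.

Lemma z0E : ((0%R : 'Z_n) : nat) = 0.
Proof. by []. Qed.

Lemma zoppE (z : 'Z_n) : ((- z)%R : nat) = if (z : nat) == 0 then 0 else n - z.
Proof.
case: z => m hm /=; rewrite (Zp_cast hn) in hm *.
case: eqP => [->|h]; first by rewrite subn0 modnn.
by rewrite modn_small; lia.
Qed.

End Z.

End M1.
Import M1.

Module M2.
Set Implicit Arguments. Unset Strict Implicit. Unset Printing Implicit Defensive.

Ltac ifs := repeat match goal with |- context [if ?b then _ else _] => case: (boolP b) end.

Ltac bifs := repeat match goal with
  | |- context [if ?b then _ else _] =>
      lazymatch b with true => fail | false => fail | context [if _ then _ else _] => fail | _ =>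
      let E := fresh "E" in case E: b; [ | move/negbT: E => E] end
  | |- context [nat_of_bool ?b] =>
      lazymatch b with true => fail | false => fail | _ =>
      let E := fresh "E" in case E: b; [ | move/negbT: E => E] end
  end.

Section Main.
Variables (n : nat) (hn : 1 < n) (rho : {perm midedge n}) (hrho : is_gsnake rho).

Implicit Types x y : midedge n.
Definition sc (a : nat) := if a == n.-1 then 0 else a.+1.
Definition cA (x : midedge n) : nat := x.2.1.
Definition cB (x : midedge n) : nat := x.2.2.
Definition Pc (x : midedge n) : nat := 2 * cA x + ~~ x.1.
Definition Qc (x : midedge n) : nat := 2 * cB x + x.1.
Definition lam (x : midedge n) : nat := (cA x + cB x) %% n.
Definition key (x : midedge n) : nat := lam x * (2 * n) + Pc x.

Definition act x := rho x != x.
Definition b1 x := rho x == plus1 x.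
Definition b2 x := rho x == plus2 x.
Definition b3 x := rho x == plus3 x.

Lemma cAlt x : cA x < n. Proof. exact: zlt. Qed.
Lemma cBlt x : cB x < n. Proof. exact: zlt. Qed.

Lemma zS (z : 'Z_n) : ((z + 1)%R : nat) = sc z.
Proof. rewrite zaddE // z1E // /sc; have := zlt hn z; ifs; lia. Qed.
Lemma z0' (z : 'Z_n) : ((z + 0)%R : nat) = z.
Proof. by rewrite GRing.addr0. Qed.

Lemma me_eq (x y : midedge n) : x.1 = y.1 -> cA x = cA y -> cB x = cB y -> x = y.
Proof.
case: x => c [a b]; case: y => c' [a' b']; rewrite /cA /cB /= => -> ha hb.
by rewrite (val_inj ha) (val_inj hb).
Qed.

Lemma p1_cA x : cA (plus1 x) = sc (cA x). Proof. exact: zS. Qed.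
Lemma p1_cB x : cB (plus1 x) = cB x. Proof. exact: z0'. Qed.
Lemma p2_cA x : cA (plus2 x) = cA x. Proof. exact: z0'. Qed.
Lemma p2_cB x : cB (plus2 x) = sc (cB x). Proof. exact: zS. Qed.
Lemma p3_cA x : cA (plus3 x) = if x.1 then cA x else sc (cA x).
Proof. by case: x => [[] [a b]]; [exact: z0' | exact: zS]. Qed.
Lemma p3_cB x : cB (plus3 x) = if x.1 then sc (cB x) else cB x.
Proof. by case: x => [[] [a b]]; [exact: zS | exact: z0']. Qed.
Lemma p3_c x : (plus3 x).1 = ~~ x.1.
Proof. by case: x => [[] [a b]]. Qed.

Lemma sc_neq a : a < n -> sc a != a.
Proof. rewrite /sc; ifs; lia. Qed.

Lemma p1_neq x : plus1 x != x.
Proof. apply/eqP => h; have := sc_neq (cAlt x); by rewrite -p1_cA h eqxx. Qed.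
Lemma p2_neq x : plus2 x != x.
Proof. apply/eqP => h; have := sc_neq (cBlt x); by rewrite -p2_cB h eqxx. Qed.
Lemma p3_neq x : plus3 x != x.
Proof. apply/eqP => h; have := p3_c x; rewrite h; by case: x.1. Qed.
Lemma p13 x : plus1 x != plus3 x.
Proof. apply/eqP => h; have := p3_c x; rewrite -h /=; by case: x.1. Qed.
Lemma p23 x : plus2 x != plus3 x.
Proof. apply/eqP => h; have := p3_c x; rewrite -h /=; by case: x.1. Qed.
Lemma p12 x : plus1 x != plus2 x.
Proof. apply/eqP => h; have := sc_neq (cAlt x); by rewrite -p1_cA h p2_cA eqxx. Qed.

Variant mv_spec x : bool -> bool -> bool -> bool -> Prop :=
 | MvFix of rho x = x : mv_spec x false false false false
 | Mv1 of rho x = plus1 x & x.1 = false : mv_spec x true true false false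
 | Mv2 of rho x = plus2 x & x.1 = true : mv_spec x true false true false
 | Mv3 of rho x = plus3 x : mv_spec x true false false true.

Lemma mvP x : mv_spec x (act x) (b1 x) (b2 x) (b3 x).
Proof.
rewrite /act /b1 /b2 /b3; have := hrho x.
case hx : x.1 => /= [] [h|[h|h]]; rewrite h ?eqxx.
- by rewrite !(eq_sym x) (negbTE (p1_neq x)) (negbTE (p2_neq x)) (negbTE (p3_neq x)); constructor.
- by rewrite p3_neq eq_sym (negbTE (p13 x)) eq_sym (negbTE (p23 x)); constructor.
- by rewrite p2_neq eq_sym (negbTE (p12 x)) (negbTE (p23 x)); constructor.
- by rewrite !(eq_sym x) (negbTE (p1_neq x)) (negbTE (p2_neq x)) (negbTE (p3_neq x)); constructor.
- by rewrite p3_neq eq_sym (negbTE (p13 x)) eq_sym (negbTE (p23 x)); constructor.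
- by rewrite p1_neq (negbTE (p12 x)) (negbTE (p13 x)); constructor.
Qed.

Lemma p1_c x : (plus1 x).1 = x.1. Proof. by []. Qed.
Lemma p2_c x : (plus2 x).1 = x.1. Proof. by []. Qed.

Definition dP x : nat := 2 * b1 x + b3 x.
Definition dQ x : nat := 2 * b2 x + b3 x.
Definition wP x : bool := 2 * n <= Pc x + dP x.
Definition wQ x : bool := 2 * n <= Qc x + dQ x.

Lemma PcR x : Pc (rho x) + 2 * n * wP x = Pc x + dP x.
Proof.
rewrite /wP /dP /Pc; have := cAlt x; have := cBlt x.
case: mvP => [h|h c|h c|h]; rewrite h ?p1_cA ?p2_cA ?p3_cA ?p1_c ?p2_c ?p3_c ?c /sc /=;
 bifs; lia.
Qed.

Lemma QcR x : Qc (rho x) + 2 * n * wQ x = Qc x + dQ x.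
Proof.
rewrite /wQ /dQ /Qc; have := cAlt x; have := cBlt x.
case: mvP => [h|h c|h c|h]; rewrite h ?p1_cB ?p2_cB ?p3_cB ?p1_c ?p2_c ?p3_c ?c /sc /=;
 bifs; lia.
Qed.

Lemma lamR x : lam (rho x) = if act x then sc (lam x) else lam x.
Proof.
rewrite /lam !modsmall //; try (have := cAlt x; have := cBlt x; have := cAlt (rho x); have := cBlt (rho x); lia).
have := cAlt x; have := cBlt x.
case: mvP => [h|h c|h c|h]; rewrite h ?p1_cA ?p2_cA ?p3_cA ?p1_cB ?p2_cB ?p3_cB ?p1_c ?p2_c ?p3_c ?c /sc /=;
 bifs; lia.
Qed.

Lemma PcLt x : Pc x < 2 * n.
Proof. rewrite /Pc; have := cAlt x; case: (x.1) => /=; lia. Qed.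
Lemma QcLt x : Qc x < 2 * n.
Proof. rewrite /Qc; have := cBlt x; case: (x.1) => /=; lia. Qed.
Lemma lamLt x : lam x < n.
Proof. by rewrite /lam ltn_mod; lia. Qed.

Lemma coord_inj x y : lam x = lam y -> Pc x = Pc y -> x = y.
Proof.
rewrite /lam /Pc !modsmall; try (have := cAlt x; have := cBlt x; have := cAlt y; have := cBlt y; lia).
have := cAlt x; have := cBlt x; have := cAlt y; have := cBlt y.
move=> h1 h2 h3 h4 hl hp.
have ec : x.1 = y.1 by move: hp; case: (x.1); case: (y.1) => /=; lia.
have ea : cA x = cA y by move: hp; rewrite ec; case: (y.1) => /=; lia.
apply: me_eq => //; move: hl; rewrite ea; bifs; lia.
Qed.

Lemma lexlt l1 l2 p1 p2 m : p1 < m -> p2 < m ->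
  (l1 * m + p1 < l2 * m + p2) = (l1 < l2) || ((l1 == l2) && (p1 < p2)).
Proof.
move=> h1 h2; case: (ltngtP l1 l2) => h /=.
- apply/idP; have : l1 * m + m <= l2 * m by rewrite addnC -mulSn leq_mul2r h orbT.
  lia.
- apply/negbTE; rewrite -leqNgt; have : l2 * m + m <= l1 * m by rewrite addnC -mulSn leq_mul2r h orbT.
  lia.
- by rewrite h ltn_add2l.
Qed.

Lemma keylt x y : (key x < key y) = (lam x < lam y) || ((lam x == lam y) && (Pc x < Pc y)).
Proof. by rewrite /key lexlt ?PcLt. Qed.

End Main.

End M2.
Import M2.

Module Inv.
Set Implicit Arguments. Unset Strict Implicit. Unset Printing Implicit Defensive.

Section Inv.
Variables (T : finType) (k : T -> nat).
Hypothesis kinj : injective k.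

Definition ninv (r : {perm T}) : nat :=
  \sum_(x : T) \sum_(y : T) ((k x < k y) && (k (r y) < k (r x))).

Lemma ninv1 : ninv 1 = 0.
Proof.
rewrite /ninv big1 // => x _; rewrite big1 // => y _.
by rewrite !perm1; case: ltngtP.
Qed.

Lemma kneq x y : x != y -> k x != k y.
Proof. by apply: contra => /eqP /kinj ->. Qed.

Lemma split2 (a b : T) (F : T -> nat) : a != b ->
  \sum_x F x = F a + F b + \sum_(x | (x != a) && (x != b)) F x.
Proof.
move=> ab; rewrite (bigD1 a) //= (bigD1 b) //=; last by rewrite eq_sym.
by rewrite addnA; congr (_ + _); apply: eq_bigl => x; rewrite andbC.
Qed.

Lemma ninv_tperm_lt (a b : T) (r : {perm T}) : k a < k b ->
  odd (ninv (tperm a b * r)) = ~~ odd (ninv r).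
Proof.
move=> kab.
have ab : a != b by apply: contraTneq kab => ->; rewrite ltnn.
set t := tperm a b.
have -> : ninv (t * r) = \sum_(x : T) \sum_(y : T)
    ((k (t x) < k (t y)) && (k (r y) < k (r x))).
  rewrite /ninv (reindex_inj (@perm_inj _ t)) /=; apply: eq_bigr => x _.
  rewrite (reindex_inj (@perm_inj _ t)) /=; apply: eq_bigr => y _.
  by rewrite !permM /t !tpermK.
set e := fun x y => ((k x < k y) != (k (t x) < k (t y))) && (k (r y) < k (r x)).
have step : forall x y, ((k (t x) < k (t y)) && (k (r y) < k (r x)) : nat) +
    ((k x < k y) && (k (r y) < k (r x)) : nat) =
    2 * ((k (t x) < k (t y)) && (k x < k y) && (k (r y) < k (r x))) + e x y.
  by move=> x y; rewrite /e; case: (_ < _); case: (_ < _); case: (_ < _).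
suff oE : odd (\sum_x \sum_y e x y).
  suff : odd ((\sum_(x : T) \sum_(y : T)
    ((k (t x) < k (t y)) && (k (r y) < k (r x)) : nat)) + ninv r).
    by rewrite oddD; case: (odd _); case: (odd _).
  rewrite /ninv -big_split /=.
  rewrite (eq_bigr (fun x => \sum_y (2 * ((k (t x) < k (t y)) && (k x < k y)
      && (k (r y) < k (r x)))) + \sum_y e x y)); last first.
    move=> x _; rewrite -!big_split; apply: eq_bigr => y _ /=.
    exact: step.
  rewrite big_split /= oddD oE addbT.
  rewrite (eq_bigr (fun x => 2 * \sum_y ((k (t x) < k (t y)) && (k x < k y)
      && (k (r y) < k (r x)) : nat))); last by move=> x _; rewrite big_distrr.
  by rewrite -big_distrr /= oddM.
have tz : forall z, (z != a) && (z != b) -> t z = z.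
  by move=> z /andP[za zb]; rewrite /t tpermD // eq_sym.
have ta : t a = b by rewrite /t tpermL.
have tb : t b = a by rewrite /t tpermR.
have kza : forall z, (z != a) -> k z != k a by move=> z; apply: kneq.
have kzb : forall z, (z != b) -> k z != k b by move=> z; apply: kneq.
have rne : forall z w, z != w -> k (r z) != k (r w).
  by move=> z w zw; apply: kneq; rewrite (inj_eq (@perm_inj _ r)).
set btw := fun z => (k a < k z) && (k z < k b).
have eza : forall z, (z != a) && (z != b) -> e z a = btw z && (k (r a) < k (r z)).
  move=> z zz; rewrite /e /= (tz z zz) ta /btw; case/andP: zz => /kza h1 /kzb h2.
  congr (_ && _); move: h1 h2 kab; case: ltngtP; case: ltngtP => //; lia.
have ezb : forall z, (z != a) && (z != b) -> e z b = btw z && (k (r b) < k (r z)).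
  move=> z zz; rewrite /e /= (tz z zz) tb /btw; case/andP: zz => /kza h1 /kzb h2.
  congr (_ && _); move: h1 h2 kab; case: ltngtP; case: ltngtP => //; lia.
have eaz : forall z, (z != a) && (z != b) -> e a z = btw z && (k (r z) < k (r a)).
  move=> z zz; rewrite /e /= (tz z zz) ta /btw; case/andP: zz => /kza h1 /kzb h2.
  congr (_ && _); move: h1 h2 kab; case: ltngtP; case: ltngtP => //; lia.
have ebz : forall z, (z != a) && (z != b) -> e b z = btw z && (k (r z) < k (r b)).
  move=> z zz; rewrite /e /= (tz z zz) tb /btw; case/andP: zz => /kza h1 /kzb h2.
  congr (_ && _); move: h1 h2 kab; case: ltngtP; case: ltngtP => //; lia.
have ezz : forall z w, (z != a) && (z != b) -> (w != a) && (w != b) -> e z w = false.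
  by move=> z w hz hw; rewrite /e /= (tz z hz) (tz w hw) eqxx.
have eaa : e a a = false by rewrite /e /= !ltnn.
have ebb : e b b = false by rewrite /e /= !ltnn.
have eab : e a b = (k (r b) < k (r a)) by rewrite /e /= ta tb kab ltnNge ltnW.
have eba : e b a = (k (r a) < k (r b)) by rewrite /e /= ta tb kab ltnNge ltnW.
have rowz : forall x, (x != a) && (x != b) -> \sum_y (e x y : nat) = e x a + e x b.
  move=> x hx; rewrite (split2 (fun y => e x y : nat) ab) big1 ?addn0 //.
  by move=> y hy; rewrite ezz.
rewrite (split2 (fun x => \sum_y (e x y : nat)) ab) /=.
rewrite (split2 (fun y => e a y : nat) ab) (split2 (fun y => e b y : nat) ab).
rewrite eaa ebb eab eba.
rewrite (eq_bigr _ rowz).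
rewrite (eq_bigr (fun z => btw z && (k (r z) < k (r a)) : nat) (fun z hz => congr1 nat_of_bool (eaz z hz))).
rewrite (eq_bigr (fun z => btw z && (k (r z) < k (r b)) : nat) (fun z hz => congr1 nat_of_bool (ebz z hz))).
have hab := rne _ _ ab.
set S1 := \sum_(i | _) _; set S2 := \sum_(i | _) _; set S3 := \sum_(i | _) _.
have : S1 + S2 + S3 = 2 * \sum_(z | (z != a) && (z != b)) btw z.
  rewrite /S1 /S2 /S3 -!big_split big_distrr /=; apply: eq_bigr => z hz.
  rewrite eza // ezb //; case: (btw z) => //=.
  have h1 := rne _ _ (proj1 (andP hz)); have h2 := rne _ _ (proj2 (andP hz)).
  move: h1 h2; case: (ltngtP (k (r z)) (k (r a))); case: (ltngtP (k (r z)) (k (r b))) => //.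
move=> H.
rewrite (_ : _ + _ = 1 + (S1 + S2 + S3)); last by move: hab; case: ltngtP => //= _ _; lia.
by rewrite H oddD oddM.
Qed.

Lemma ninv_tperm (a b : T) (r : {perm T}) : a != b ->
  odd (ninv (tperm a b * r)) = ~~ odd (ninv r).
Proof.
move=> ab; have := kneq ab; case: ltngtP => // h _.
  exact: ninv_tperm_lt.
by rewrite tpermC; apply: ninv_tperm_lt.
Qed.

Lemma odd_perm_ninv (r : {perm T}) : odd_perm r = odd (ninv r).
Proof.
have [ts -> dts] := prod_tpermP r.
elim: ts dts => [|t ts IH] /=; first by rewrite big_nil odd_perm1 ninv1.
case/andP=> dt dts; rewrite big_cons odd_mul_tperm dt ninv_tperm // IH //.
Qed.

Lemma fixcount (r : {perm T}) f : r f = f ->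
  \sum_y ((k f < k y) && (k (r y) < k f) : nat) =
  \sum_x ((k x < k f) && (k f < k (r x)) : nat).
Proof.
move=> rf.
have E : \sum_y ((k (r y) < k f) : nat) = \sum_y ((k y < k f) : nat).
  by rewrite (reindex_inj (@perm_inj _ r^-1)) /=; apply: eq_bigr => y _; rewrite permKV.
have E1 : forall y, ((k (r y) < k f) : nat) =
   ((k f < k y) && (k (r y) < k f) : nat) + ((k y < k f) && (k (r y) < k f) : nat).
  move=> y; have [->|yf] := eqVneq y f; first by rewrite rf ltnn.
  by have := kneq yf; case: (ltngtP (k y) (k f)); case: (k (r y) < k f).
have E2 : forall y, ((k y < k f) : nat) =
   ((k y < k f) && (k f < k (r y)) : nat) + ((k y < k f) && (k (r y) < k f) : nat).
  move=> y; have [->|yf] := eqVneq y f; first by rewrite ltnn.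
  have : r y != f by apply: contra yf => /eqP ryf; apply/eqP; apply: (@perm_inj _ r); rewrite ryf rf.
  move/kneq; case: (ltngtP (k (r y)) (k f)); case: (ltngtP (k y) (k f)) => //.
rewrite (eq_bigr _ (fun y _ => E1 y)) (eq_bigr (fun y => _ + _) (fun y _ => E2 y)) !big_split /= in E.
by move/addIn: E.
Qed.

Lemma ninv_act (r : {perm T}) : odd (ninv r) =
  odd (\sum_x \sum_y ((r x != x) && (r y != y) && (k x < k y) && (k (r y) < k (r x)) : nat)).
Proof.
set I := fun x y => ((k x < k y) && (k (r y) < k (r x)) : nat).
have E : forall x y, I x y = ((r x != x) && (r y != y) && (k x < k y) && (k (r y) < k (r x)) : nat)
   + ((r x == x) : nat) * I x y + ((r y == y) : nat) * I x y.
  move=> x y; rewrite /I.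
  case: (eqVneq (r x) x) => [rx|rx]; case: (eqVneq (r y) y) => [ry|ry] //=.
  - by rewrite rx ry; case: ltngtP.
  - by rewrite !add0n !addn0 mul1n.
  - by rewrite !add0n mul1n.
  - by rewrite !addn0.
rewrite /ninv -/I.
rewrite (eq_bigr (fun x => \sum_y ((r x != x) && (r y != y) && (k x < k y) && (k (r y) < k (r x)) : nat)
   + ((r x == x) : nat) * \sum_y I x y + \sum_y ((r y == y) : nat) * I x y)); last first.
  by move=> x _; rewrite big_distrr -!big_split /=; apply: eq_bigr => y _; exact: (E x y).
rewrite !big_split /= -addnA oddD.
suff -> : odd (\sum_i ((r i == i) : nat) * \sum_y I i y + \sum_i \sum_y ((r y == y) : nat) * I i y) = false
  by rewrite addbF.
rewrite [X in _ + X]exchange_big -big_split /=.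
rewrite (eq_bigr (fun x => 2 * (((r x == x) : nat) * \sum_y I x y))); last first.
  move=> x _; rewrite -big_distrr /=; case: (eqVneq (r x) x) => rx; last by rewrite !mul0n.
  by rewrite !mul1n /I rx (fixcount rx) mul2n addnn.
by rewrite -big_distrr oddM.
Qed.
End Inv.

End Inv.
Import Inv.

Module M3.
Set Implicit Arguments. Unset Strict Implicit. Unset Printing Implicit Defensive.

Lemma card_sum (T : finType) (P : pred T) : #|[set x | P x]| = \sum_x (P x : nat).
Proof. by rewrite -sum1dep_card big_mkcond; apply: eq_bigr => x _; case: (P x). Qed.

Section M3.
Variables (n : nat) (hn : 1 < n) (rho : {perm midedge n}) (hrho : is_gsnake rho).
Implicit Types x y : midedge n.
Local Notation act := (M2.act rho).
Local Notation b1 := (b1 rho).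
Local Notation b2 := (b2 rho).
Local Notation b3 := (b3 rho).
Local Notation Pc := (@Pc n).
Local Notation Qc := (@Qc n).
Local Notation lam := (@lam n).
Local Notation key := (@key n).
Local Notation wP := (wP rho).
Local Notation wQ := (wQ rho).
Local Notation dP := (dP rho).
Local Notation dQ := (dQ rho).

Lemma sum_rho (f : midedge n -> nat) : \sum_x f (rho x) = \sum_x f x.
Proof.
by rewrite (reindex_inj (@perm_inj _ rho^-1)) /=; apply: eq_bigr => x _; rewrite permKV.
Qed.

Definition Wp := \sum_x (wP x : nat).
Definition Wq := \sum_x (wQ x : nat).

Lemma sum_dP : \sum_x dP x = 2 * n * Wp.
Proof.
have E : \sum_x (Pc (rho x) + 2 * n * wP x) = \sum_x (Pc x + dP x).
  by apply: eq_bigr => x _; exact: PcR.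
rewrite big_split /= in E; rewrite [X in _ = X]big_split /= sum_rho -big_distrr /= in E.
by move/addnI: E.
Qed.

Lemma sum_dQ : \sum_x dQ x = 2 * n * Wq.
Proof.
have E : \sum_x (Qc (rho x) + 2 * n * wQ x) = \sum_x (Qc x + dQ x).
  by apply: eq_bigr => x _; exact: QcR.
rewrite big_split /= in E; rewrite [X in _ = X]big_split /= sum_rho -big_distrr /= in E.
by move/addnI: E.
Qed.

Lemma A_sum : Acount rho = \sum_x (b1 x : nat).
Proof. by rewrite /Acount card_sum; apply: eq_bigr. Qed.
Lemma B_sum : Bcount rho = \sum_x (b2 x : nat).
Proof. by rewrite /Bcount card_sum; apply: eq_bigr. Qed.
Lemma C_sum : Ccount rho = \sum_x (b3 x : nat).
Proof. by rewrite /Ccount card_sum; apply: eq_bigr. Qed.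

Lemma AC_W : 2 * Acount rho + Ccount rho = 2 * n * Wp.
Proof.
rewrite -sum_dP A_sum C_sum big_distrr -big_split /=.
by apply: eq_bigr.
Qed.

Lemma BC_W : 2 * Bcount rho + Ccount rho = 2 * n * Wq.
Proof.
rewrite -sum_dQ B_sum C_sum big_distrr -big_split /=.
by apply: eq_bigr.
Qed.

Lemma act_b x : (act x : nat) = b1 x + b2 x + b3 x.
Proof. by case: mvP. Qed.

Definition Mtot := \sum_x (act x : nat).

Lemma Mtot_eq : Mtot = n * (Wp + Wq).
Proof.
have : 2 * Mtot = 2 * (n * (Wp + Wq)).
  have := AC_W; have := BC_W; rewrite A_sum B_sum C_sum.
  rewrite /Mtot (eq_bigr _ (fun x _ => act_b x)) big_split /= big_split /=.
  move=> hB hA; rewrite !mulnDr !mulnA -hA -hB; lia.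
by move/eqP; rewrite eqn_pmul2l // => /eqP.
Qed.

Definition ml s := \sum_x ((act x) && (lam x == s) : nat).

Lemma sc_inj a b : a < n -> b < n -> (sc n a == sc n b) = (a == b).
Proof. by rewrite /sc => ha hb; bifs; lia. Qed.

Lemma ml_step s : s < n -> ml s = ml (sc n s).
Proof.
move=> hs.
have E := sum_rho (fun x => (lam x == sc n s) : nat).
have E1 : forall x, ((lam (rho x) == sc n s) : nat) =
  ((act x) && (lam x == s) : nat) + ((~~ act x) && (lam x == sc n s) : nat).
  move=> x; rewrite (lamR hn hrho x); case: (act x) => //=.
  by rewrite sc_inj ?(lamLt hn) // addn0.
have E2 : forall x, ((lam x == sc n s) : nat) =
  ((act x) && (lam x == sc n s) : nat) + ((~~ act x) && (lam x == sc n s) : nat).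
  by move=> x; case: (act x); rewrite /= ?addn0.
rewrite (eq_bigr _ (fun x _ => E1 x)) (eq_bigr _ (fun x _ => E2 x)) !big_split /= in E.
by move/addIn: E.
Qed.

Lemma ml_const s : s < n -> ml s = ml 0.
Proof.
elim: s => // s IH hs; have hs' : s < n by lia.
rewrite -(IH hs') (ml_step hs') /sc; case: eqP => //; lia.
Qed.

Lemma Mtot_ml : Mtot = n * ml 0.
Proof.
rewrite /Mtot (eq_bigr (fun x => \sum_(s < n) ((act x) && (lam x == s) : nat))); last first.
  move=> x _; rewrite (bigD1 (Ordinal (lamLt hn x))) //= eqxx big1 ?addn0 ?andbT //.
  by move=> i /negbTE hi; rewrite -(inj_eq val_inj) /= eq_sym in hi; rewrite hi andbF.
rewrite exchange_big /= (eq_bigr (fun _ => ml 0)); last by move=> i _; exact: (ml_const (ltn_ord i)).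
by rewrite sum_nat_const card_ord.
Qed.

Lemma ml0_W : ml 0 = Wp + Wq.
Proof.
have := Mtot_eq; rewrite Mtot_ml => /eqP; rewrite eqn_pmul2l; last lia.
by move/eqP.
Qed.

End M3.

End M3.
Import M3.

Module M4.
Set Implicit Arguments. Unset Strict Implicit. Unset Printing Implicit Defensive.

Section M4.
Variables (n : nat) (hn : 1 < n) (rho : {perm midedge n}) (hrho : is_gsnake rho).
Implicit Types x y : midedge n.
Local Notation act := (M2.act rho).
Local Notation b1 := (b1 rho).
Local Notation b2 := (b2 rho).
Local Notation b3 := (b3 rho).
Local Notation Pc := (@Pc n).
Local Notation lam := (@lam n).
Local Notation key := (@key n).
Local Notation wP := (wP rho).
Local Notation dP := (dP rho).

Definition Tr x y : bool := [&& act x, act y, lam x == lam y & Pc x < Pc y].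
Definition nxt (p : nat) := if p == (2 * n).-1 then 0 else p.+1.
Definition Zr x y : bool := [&& lam x == lam y, b1 x, b2 y & Pc y == nxt (Pc x)].

Lemma L_I x y :
  ((act x) && (act y) && (key x < key y) && (key (rho y) < key (rho x)) : nat) =
  ((act x) && (lam x < n.-1) && ((act y) && (lam y == n.-1)) : nat) +
  Tr x y * (Pc (rho y) < Pc (rho x)).
Proof.
rewrite /Tr !(keylt hn) (lamR hn hrho x) (lamR hn hrho y).
have := lamLt hn x; have := lamLt hn y.
case: (act x); case: (act y); rewrite /= ?andbF //.
rewrite /sc; bifs; lia.
Qed.

Lemma b1_act x : b1 x -> act x. Proof. by case: mvP. Qed.
Lemma b2_act x : b2 x -> act x. Proof. by case: mvP. Qed.

Lemma key2 x y :
  Tr x y * (Pc (rho y) < Pc (rho x)) + Zr y x * (Pc y == (2 * n).-1) =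
  Zr x y * (Pc x < (2 * n).-1) + Tr x y * wP y.
Proof.
have hx := PcLt hn x; have hy := PcLt hn y.
case hT: (Tr x y); last first.
  have -> : (Zr x y : nat) * (Pc x < (2 * n).-1) = 0.
    case hz: (Zr x y); case hp: (Pc x < _) => //; move: hz hT => /and4P[l1 h1 h2 /eqP e].
    rewrite /Tr (b1_act h1) (b2_act h2) l1 e /nxt; case: eqP => [e0|_] /=; first by move: hp; rewrite e0; lia.
    by rewrite ltnSn.
  have -> : (Zr y x : nat) * (Pc y == (2 * n).-1) = 0.
    case hz: (Zr y x); case hp: (Pc y == _) => //; move: hz hT => /and4P[l1 h1 h2 /eqP e].
    by rewrite /Tr (b1_act h1) (b2_act h2) eq_sym l1 e /nxt hp /=; move/eqP: hp; lia.
  by rewrite !mul0n.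
move: (hT) => /and4P[ax ay /eqP lxy pxy].
have ne : Pc (rho x) != Pc (rho y).
  apply/eqP => e; have : rho x = rho y.
    by apply: (coord_inj hn) => //; rewrite !(lamR hn hrho) ax ay lxy.
  by move/perm_inj => exy; move: pxy; rewrite exy ltnn.
have ex := PcR hn hrho x; have ey := PcR hn hrho y.
have hpx : Pc x = 2 * cA x + ~~ x.1 by [].
have hpy : Pc y = 2 * cB y * 0 + 2 * cA y + ~~ y.1 by rewrite muln0.
move: ex ey ne hpx hpy; rewrite /Zr /wP /dP /nxt lxy eqxx /=.
move: ax ay; case: (mvP hn hrho x) => [h|h c|h c|h] //= _; rewrite ?c /=;
  case: (mvP hn hrho y) => [h'|h' c'|h' c'|h'] //= _; rewrite ?c' /= => ex ey ne hpx hpy;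
  bifs; lia.
Qed.

End M4.

End M4.
Import M4.

Module M5.
Set Implicit Arguments. Unset Strict Implicit. Unset Printing Implicit Defensive.

Section M5.
Variables (n : nat) (hn : 1 < n) (rho : {perm midedge n}) (hrho : is_gsnake rho).
Implicit Types x y : midedge n.
Local Notation act := (M2.act rho).
Local Notation b1 := (b1 rho).
Local Notation b2 := (b2 rho).
Local Notation Pc := (@Pc n).
Local Notation lam := (@lam n).
Local Notation key := (@key n).
Local Notation wP := (wP rho).
Local Notation Tr := (Tr rho).
Local Notation Zr := (Zr rho).
Local Notation ml := (ml rho).
Local Notation Mtot := (Mtot rho).

Lemma key_inj : injective key.
Proof.
move=> x y e.
have h1 : ~~ (key x < key y) by rewrite e ltnn.
have h2 : ~~ (key y < key x) by rewrite e ltnn.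
rewrite !(keylt hn) in h1 h2.
have el : lam x = lam y by move: h1 h2; case: (ltngtP (lam x) (lam y)).
rewrite el eqxx ltnn /= in h1 h2.
have ep : Pc x = Pc y by move: h1 h2; case: (ltngtP (Pc x) (Pc y)).
exact: (coord_inj hn el ep).
Qed.

Definition X1 := \sum_x \sum_y ((act x) && (lam x < n.-1) && ((act y) && (lam y == n.-1)) : nat).
Definition X2 := \sum_x \sum_y Tr x y * (Pc (rho y) < Pc (rho x)).

Lemma inv_split : odd_perm rho = odd (X1 + X2).
Proof.
rewrite (odd_perm_ninv key_inj) (ninv_act key_inj) /X1 /X2 -big_split /=.
congr (odd _); apply: eq_bigr => x _; rewrite -big_split /=; apply: eq_bigr => y _.
exact: (L_I hn hrho).
Qed.

Lemma X1_eq : X1 = (Mtot - ml 0) * ml 0.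
Proof.
have E : \sum_x ((act x) && (lam x < n.-1) : nat) + ml n.-1 = Mtot.
  rewrite /ml /Mtot -big_split /=; apply: eq_bigr => x _.
  have := lamLt hn x; case: (act x) => //= h.
  by case: ltngtP => //; lia.
rewrite -(ml_const hn hrho (s := n.-1)); last lia.
rewrite -E addnK /X1 big_distrl /=; apply: eq_bigr => x _.
rewrite big_distrr /=; apply: eq_bigr => y _.
by rewrite mulnb.
Qed.

Definition Zs := \sum_x \sum_y (Zr x y : nat).
Definition Ws := \sum_x \sum_y Tr x y * wP y.

Lemma X2_odd : odd X2 = odd (Zs + Ws).
Proof.
have E : \sum_x \sum_y (Tr x y * (Pc (rho y) < Pc (rho x)) + Zr y x * (Pc y == (2 * n).-1)) =
         \sum_x \sum_y (Zr x y * (Pc x < (2 * n).-1) + Tr x y * wP y).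
  by apply: eq_bigr => x _; apply: eq_bigr => y _; apply: (key2 hn hrho).
rewrite (eq_bigr _ (fun x _ => big_split _ _ _ _ _)) big_split /= in E.
rewrite [X in _ = X](eq_bigr _ (fun x _ => big_split _ _ _ _ _)) [X in _ = X]big_split /= in E.
rewrite [X in _ + X = _]exchange_big /= -/X2 -/Ws in E.
have E2 : Zs = \sum_x \sum_y Zr x y * (Pc x < (2 * n).-1) + \sum_x \sum_y Zr x y * (Pc x == (2 * n).-1).
  rewrite /Zs -big_split /=; apply: eq_bigr => x _; rewrite -big_split /=; apply: eq_bigr => y _.
  have := PcLt hn x; case: (Zr x y) => //=; case: ltngtP => //; lia.
have -> : Zs + Ws = X2 + 2 * \sum_x \sum_y Zr x y * (Pc x == (2 * n).-1) by rewrite E2 addnAC -E -addnA addnn -mul2n.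
by rewrite ssrnat.oddD ssrnat.oddM /= addbF.
Qed.

Lemma wP_prop y : wP y -> act y /\ Pc y = (2 * n).-1.
Proof.
rewrite /M2.wP /M2.dP; have := PcLt hn y; have hp : Pc y = 2 * cA y + ~~ y.1 by [].
move: hp; case: (mvP hn hrho y) => [h|h c|h c|h] /=; rewrite ?c /= => hp hl; split => //; lia.
Qed.

Lemma sum_eq1 (y : midedge n) : \sum_x ((x == y) : nat) = 1.
Proof. by rewrite (bigD1 y) //= eqxx big1 // => x /negbTE ->. Qed.

Lemma Ws_eq : Ws = Wp rho * (ml 0 - 1).
Proof.
rewrite /Ws exchange_big /Wp big_distrl /=; apply: eq_bigr => y _.
case hw: (wP y); last by rewrite /= mul0n big1 // => x _; rewrite muln0.
have [ay py] := wP_prop hw.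
rewrite mul1n (eq_bigr (fun x => Tr x y : nat)); last by move=> x _; rewrite /= muln1.
rewrite -(ml_const hn hrho (lamLt hn y)).
have E : forall x, ((act x) && (lam x == lam y) : nat) = Tr x y + (x == y).
  move=> x; rewrite /M4.Tr ay; have [->|xy] := eqVneq x y; first by rewrite ay eqxx ltnn.
  rewrite addn0; case ax: (act x) => //=; case el: (lam x == lam y) => //=.
  have : Pc x != Pc y.
    by apply: contra xy => /eqP ep; apply/eqP; apply: (coord_inj hn) => //; apply/eqP.
  have := PcLt hn x; rewrite py; case: ltngtP => //; lia.
rewrite /ml (eq_bigr _ (fun x _ => E x)) big_split /= sum_eq1; by rewrite addnK.
Qed.

End M5.

End M5.
Import M5.

Module M6.
Set Implicit Arguments. Unset Strict Implicit. Unset Printing Implicit Defensive.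

Section M6.
Variables (n : nat) (hn : 1 < n) (rho : {perm midedge n}) (hrho : is_gsnake rho).
Implicit Types x y : midedge n.
Local Notation act := (M2.act rho).
Local Notation b1 := (b1 rho).
Local Notation b2 := (b2 rho).
Local Notation Pc := (@Pc n).
Local Notation lam := (@lam n).
Local Notation Zr := (Zr rho).

Definition partner x : midedge n := (true, (x.2.1 + 1, x.2.2 - 1))%R.

Lemma zm1 (z : 'Z_n) : ((z - 1)%R : nat) = if (z : nat) == 0 then n.-1 else (z : nat).-1.
Proof.
rewrite zaddE // zoppE // z1E //; have := zlt hn z; bifs; lia.
Qed.

Lemma pt_cA x : cA (partner x) = sc n (cA x). Proof. exact: zS. Qed.
Lemma pt_cB x : cB (partner x) = if cB x == 0 then n.-1 else (cB x).-1.
Proof. exact: zm1. Qed.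
Lemma pt_c x : (partner x).1 = true. Proof. by []. Qed.

Lemma partner_coord x : x.1 = false -> lam (partner x) = lam x /\ Pc (partner x) = nxt n (Pc x).
Proof.
move=> c; rewrite /lam /Pc pt_cA pt_cB pt_c c /nxt /sc.
have := cAlt hn x; have := cBlt hn x => h1 h2.
rewrite !modsmall; try (bifs; lia).
Qed.

Lemma Zr_partner x y : Zr x y = (y == partner x) && b1 x && b2 y.
Proof.
rewrite /M4.Zr; case hb: (b1 x); last by rewrite !andbF.
have c : x.1 = false by move: hb; case: (mvP hn hrho x).
have [l p] := partner_coord c.
rewrite andbT /=; case: (b2 y); rewrite ?andbF ?andbT //=.
apply/idP/idP.
  by case/andP => /eqP l1 /eqP p1; apply/eqP; apply: (coord_inj hn); rewrite ?l ?p.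
by move/eqP => ->; rewrite l p !eqxx.
Qed.

Lemma Zs_row x : \sum_y (Zr x y : nat) = (b1 x && b2 (partner x)).
Proof.
rewrite (eq_bigr _ (fun y _ => congr1 nat_of_bool (Zr_partner x y))).
rewrite (bigD1 (partner x)) //= eqxx big1 ?addn0 // => y /negbTE -> //.
Qed.

Lemma plus1_black (v : vert n) : plus1 (black (vsub v e1)) = black v.
Proof.
case: v => a b; rewrite /plus1 /black /vsub /vadd /e1 /=.
by rewrite GRing.subrK GRing.subr0 GRing.addr0.
Qed.

Lemma partner_black (v : vert n) : partner (black (vsub v e1)) = white (vsub v e2).
Proof.
case: v => a b; rewrite /partner /black /white /vsub /e1 /e2 /=.
by rewrite GRing.subrK !GRing.subr0.
Qed.

Lemma plus2_white (v : vert n) : plus2 (white (vsub v e2)) = white v.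
Proof.
case: v => a b; rewrite /plus2 /white /vsub /vadd /e2 /=.
by rewrite !(GRing.subr0, GRing.addr0, GRing.subrK).
Qed.

Lemma vsubK (v w : vert n) : vadd (vsub v w) w = v.
Proof. by case: v w => a b [c d]; rewrite /vadd /vsub /= !GRing.subrK. Qed.

Lemma Zs_S : Zs rho = Scount rho.
Proof.
rewrite /Zs (eq_bigr _ (fun x _ => Zs_row x)).
rewrite (eq_bigr (fun x => (fun c (v : vert n) => (b1 (c, v) && b2 (partner (c, v)) : nat)) x.1 x.2)); last by case.
rewrite (_ : \sum_(x : midedge n) _ = \sum_(c : bool) \sum_(v : vert n) (b1 (c, v) && b2 (partner (c, v)) : nat)); last by rewrite pair_bigA.
rewrite big_bool /=.
rewrite big1 ?add0n; last first.
  move=> v _; case hb: (b1 (true, v)) => //.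
  by move: hb; case: (mvP hn hrho (true, v)).
rewrite /Scount card_sum (reindex_inj (h := fun v => vsub v e1)); last first.
  by move=> u w /= e; rewrite -(vsubK u e1) e vsubK.
apply: eq_bigr => v _.
rewrite /M2.b1 /M2.b2 /=.
by rewrite -[black (vsub v e1)]/(false, vsub v e1) plus1_black partner_black plus2_white.
Qed.

End M6.

End M6.
Import M6.

Module M7.
Set Implicit Arguments. Unset Strict Implicit. Unset Printing Implicit Defensive.
Import Order.TTheory GRing.Theory Num.Theory.
Local Open Scope ring_scope.

Section Trig.
Variable R : realType.

Lemma cos_npi (k : nat) : cos (pi * k%:R) = (-1) ^+ k :> R.
Proof.
elim: k => [|k IH]; first by rewrite mulr0 cos0 expr0.
by rewrite -addn1 natrD mulrDr mulr1 cosDpi IH exprD expr1 mulrN1.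
Qed.

Lemma sin_npi (k : nat) : sin (pi * k%:R) = 0 :> R.
Proof.
elim: k => [|k IH]; first by rewrite mulr0 sin0.
by rewrite -addn1 natrD mulrDr mulr1 sinDpi IH oppr0.
Qed.

Lemma expi_npi (k : nat) : expi (pi * k%:R) = ((-1) ^+ k : R)%:C%C.
Proof. by rewrite /expi cos_npi sin_npi. Qed.

Lemma sign_odd (k : nat) : (-1) ^+ k = (-1) ^+ (odd k) :> R.
Proof. by rewrite signr_odd. Qed.

Lemma sgn_if (k : nat) : (-1) ^+ k = (if odd k then -1 else 1) :> R.
Proof. by rewrite -signr_odd; case: (odd k); rewrite ?expr1 ?expr0. Qed.

Lemma oddWp (Wp Wq : nat) : odd Wp && odd (Wp + Wq - 1)%N = odd Wp && ~~ odd (Wp + Wq).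
Proof. case: Wp => //= w; rewrite addSn subn1 /= negbK; by case: (odd _). Qed.

Lemma oddNm (n m : nat) : (0 < n)%N -> odd ((n * m - m) * m)%N = (~~ odd n) && odd m.
Proof.
move=> hn; rewrite -{2}[m]mul1n -mulnBl oddM.
case: n hn => [//|n] _; rewrite subSS subn0 oddM /= negbK.
by case: (odd n); case: (odd m).
Qed.

Lemma final_id (n Wp Wq S : nat) : (0 < n)%N ->
  let m := (Wp + Wq)%N in
  (-1) ^+ (odd ((n * m - m) * m) (+) odd (S + Wp * (m - 1))) * (-1) ^+ S =
  \sum_(th : bool * bool) Ctheta n th.1 th.2 * (-1) ^+ (th.1 * Wp + th.2 * Wq)%N :> R.
Proof.
move=> hn m.
rewrite (_ : \sum_(th : bool * bool) _ = \sum_(a : bool) \sum_(b : bool)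
   Ctheta n a b * (-1) ^+ (a * Wp + b * Wq)%N); last by rewrite pair_bigA.
rewrite !big_bool /= /Ctheta /m oddNm // (oddD S) (oddM Wp) oddWp.
rewrite !sgn_if !oddb !add0n !add1n !addn1 !oddD !oddM /= ?negbK.
case: (odd n); case: (odd Wp); case: (odd Wq); case: (odd S); rewrite /=; lra.
Qed.

End Trig.

End M7.
Import M7.

Import Order.TTheory GRing.Theory Num.Theory.
Unset Implicit Arguments. Set Strict Implicit. Set Printing Implicit Defensive.
Local Open Scope ring_scope.

Lemma halfsum (R : realType) (A C N W : nat) : (2 * A + C = 2 * N * W)%N ->
  A%:R + 2^-1 * C%:R = N%:R * W%:R :> R.
Proof.
move=> h; have := congr1 (fun k => k%:R : R) h; rewrite /= !natrD !natrM => h'.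
lra.
Qed.

Theorem lemma3p2 (R : realType) (n : nat) (hn : (2 <= n)%N)
  (rho : {perm midedge n}) (hrho : is_gsnake rho) :
  lhs (R := R) rho = rhs rho.
Proof.
have hn1 : (1 < n)%N := hn.
have Hm : ml rho 0 = (Wp rho + Wq rho)%N := ml0_W hn1 hrho.
have Hodd : odd_perm rho = odd ((n * ml rho 0 - ml rho 0) * ml rho 0)%N
    (+) odd (Scount rho + Wp rho * (ml rho 0 - 1))%N.
  rewrite (inv_split hn1 hrho) oddD (X1_eq hn1 hrho) (X2_odd hn1 hrho) (Zs_S hn1 hrho).
  by rewrite (Ws_eq hn1 hrho) (Mtot_ml hn1 hrho).
rewrite /lhs /rhs Hodd Hm (@final_id R n (Wp rho) (Wq rho) (Scount rho) (ltnW hn1)).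
rewrite rmorph_sum; apply: eq_bigr => th _; rewrite rmorphM; congr (_ * _).
have nz : (n%:R : R) != 0 by rewrite pnatr_eq0 -lt0n ltnW.
have -> : pi * th.1%:R / n%:R * ((Acount rho)%:R + 2^-1 * (Ccount rho)%:R) +
     pi * th.2%:R / n%:R * ((Bcount rho)%:R + 2^-1 * (Ccount rho)%:R) =
     pi * (th.1 * Wp rho + th.2 * Wq rho)%:R :> R.
  rewrite (halfsum R _ _ _ _ (AC_W hn1 hrho)) (halfsum R _ _ _ _ (BC_W hn1 hrho)) natrD !natrM.
  by field.
by rewrite expi_npi.
Qed.
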